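(* Let $M_m$ be a rotationally symmetric plane and $q\neq o$. If the geodesic $\gamma_q$ is escaping, then $m(r)>m(r_q)$ for all $r>r_q$, and $m'(r_q)>0$.
   Context: For a smooth function $m\colon[0,\infty)\to[0,\infty)$ with $m(0)=0$, $m'(0)=1$, $m>0$ on $(0,\infty)$ and smooth odd extension, $M_m$ is $\mathbb R^2$ with metric $dr^2+m(r)^2d\theta^2$ (polar coordinates $(r,\theta)$ about origin $o$). For $q\ne o$, $r_q$ is its $r$-coordinate and $\gamma_q\colon[0,\infty)\to M_m$ is the unit speed geodesic starting at $q$ in direction $\partial_\theta$. A geodesic is escaping if its image is unbounded. *)

(* Defs.v *)
From Stdlib Require Import Reals.
From Coquelicot Require Import Coquelicot.
Open Scope R_scope.

Definition smooth (f : R -> R) : Prop := forall (n : nat) (x : R), ex_derive_n f n x.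

(* The warping function m of the rotationally symmetric plane M_m, given
   through its smooth odd extension to R:  m smooth, odd, m(0)=0, m'(0)=1,
   m > 0 on (0, oo). *)
Definition warping (m : R -> R) : Prop :=
  smooth m /\ (forall x, m (- x) = - m x) /\ m 0 = 0 /\ Derive m 0 = 1 /\
  (forall x, 0 < x -> 0 < m x).

(* A curve t |-> (r t, th t) in polar coordinates (r > 0, th a continuous lift
   of the angle) is a geodesic of  dr^2 + m(r)^2 dth^2  iff it satisfies the
   geodesic equations (Christoffel symbols of the warped metric):
     r''  =  m(r) m'(r) th'^2
     th'' = -2 (m'(r)/m(r)) r' th'                                          *)
Definition polar_geodesic (m : R -> R) (r th : R -> R) : Prop :=
  forall t : R,
    0 < r t /\
    ex_derive r t /\ ex_derive (Derive r) t /\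
    ex_derive th t /\ ex_derive (Derive th) t /\
    Derive (Derive r) t = m (r t) * Derive m (r t) * (Derive th t) ^ 2 /\
    Derive (Derive th) t = - 2 * (Derive m (r t) / m (r t)) * Derive r t * Derive th t.

(* gamma_q for q with polar coordinates (rq, thq), rq > 0: the unit speed
   geodesic starting at q with initial velocity  d_theta / |d_theta| =
   (1/m(rq)) d_theta, i.e. r(0)=rq, r'(0)=0, th(0)=thq, th'(0)=1/m(rq). *)
Definition is_gamma_q (m : R -> R) (rq thq : R) (r th : R -> R) : Prop :=
  polar_geodesic m r th /\
  r 0 = rq /\ Derive r 0 = 0 /\ th 0 = thq /\ Derive th 0 = / m rq.

(* gamma_q : [0,oo) -> M_m is escaping iff its image is unbounded; since r is
   the distance to o, this means r is unbounded on [0,oo). *)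
Definition escaping (r : R -> R) : Prop :=
  forall B : R, exists t : R, 0 <= t /\ B < r t.

(* Main.v *)
Require Import Defs.
From Stdlib Require Import Reals Lra.
From Coquelicot Require Import Coquelicot.
Open Scope R_scope.

Lemma dmul (f g : R -> R) x df dg : is_derive f x df -> is_derive g x dg ->
  is_derive (fun t => f t * g t) x (df * g x + f x * dg).
Proof. intros H1 H2. apply (is_derive_mult f g x df dg H1 H2). intros; apply Rmult_comm. Qed.

Lemma dplus (f g : R -> R) x df dg : is_derive f x df -> is_derive g x dg ->
  is_derive (fun t => f t + g t) x (df + dg).
Proof. intros H1 H2. apply (is_derive_plus f g x df dg H1 H2). Qed.

Lemma dcomp (f g : R -> R) x df dg : is_derive f (g x) df -> is_derive g x dg ->
  is_derive (fun t => f (g t)) x (dg * df).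
Proof. intros H1 H2. apply (is_derive_comp f g x df dg H1 H2). Qed.

Lemma ex_cont (f : R -> R) x : ex_derive f x -> continuity_pt f x.
Proof. intros H. apply derivable_continuous_pt. now apply ex_derive_Reals_0. Qed.

Lemma deriv_const (f : R -> R) : (forall x, is_derive f x 0) -> forall x y, f x = f y.
Proof.
  intros H x y. destruct (MVT_gen f x y (fun _ => 0)) as [c [_ Hc]].
  - intros; apply H.
  - intros z _. apply ex_cont. eexists; apply H.
  - lra.
Qed.

Lemma conserv (m r th : R -> R) :
  (forall x, ex_derive m x) -> (forall x, 0 < x -> 0 < m x) -> polar_geodesic m r th ->
  (forall t u, m (r t) * m (r t) * Derive th t = m (r u) * m (r u) * Derive th u) /\
  (forall t u, Derive r t * Derive r t + m (r t) * m (r t) * (Derive th t * Derive th t)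
     = Derive r u * Derive r u + m (r u) * m (r u) * (Derive th u * Derive th u)).
Proof.
  intros Hm Hm0 Hg.
  assert (Hmr : forall t, is_derive (fun t => m (r t)) t (Derive r t * Derive m (r t))).
  { intros t. destruct (Hg t) as (_&H1&_). apply dcomp.
    apply Derive_correct, Hm. now apply Derive_correct. }
  split.
  - apply deriv_const. intros t.
    destruct (Hg t) as (Hpos&H1&H2&H3&H4&E1&E2).
    assert (Hmpos : m (r t) <> 0). { apply Rgt_not_eq, Hm0, Hpos. }
    replace 0 with ((Derive r t * Derive m (r t) * m (r t) + m (r t) * (Derive r t * Derive m (r t))) * Derive th t + m (r t) * m (r t) * Derive (Derive th) t).
    2:{ rewrite E2. field. exact Hmpos. }
    apply (dmul (fun t => m (r t) * m (r t)) (Derive th)). apply (dmul (fun t => m (r t)) (fun t => m (r t))); apply Hmr. now apply Derive_correct.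
  - apply deriv_const. intros t.
    destruct (Hg t) as (Hpos&H1&H2&H3&H4&E1&E2).
    assert (Hmpos : m (r t) <> 0). { apply Rgt_not_eq, Hm0, Hpos. }
    replace 0 with ((Derive (Derive r) t * Derive r t + Derive r t * Derive (Derive r) t) +
      ((Derive r t * Derive m (r t) * m (r t) + m (r t) * (Derive r t * Derive m (r t))) * (Derive th t * Derive th t) + m (r t) * m (r t) * (Derive (Derive th) t * Derive th t + Derive th t * Derive (Derive th) t))).
    2:{ rewrite E1, E2. field. exact Hmpos. }
    apply (dplus (fun t => Derive r t * Derive r t) (fun t => m (r t) * m (r t) * (Derive th t * Derive th t))). apply (dmul (Derive r) (Derive r)); now apply Derive_correct.
    apply (dmul (fun t => m (r t) * m (r t)) (fun t => Derive th t * Derive th t)). apply (dmul (fun t => m (r t)) (fun t => m (r t))); apply Hmr. apply (dmul (Derive th) (Derive th)); now apply Derive_correct.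
Qed.
Lemma dexpk k u : is_derive (fun u => exp (k * u)) u (k * exp (k * u)).
Proof.
  auto_derive; auto. ring.
Qed.

Lemma mono_aux (w dw : R -> R) a b : a <= b -> (forall u, is_derive w u (dw u)) ->
  (forall u, a <= u <= b -> dw u <= 0) -> w b <= w a.
Proof.
  intros Hab Hd Hs. destruct (MVT_gen w a b dw) as [c [Hc E]].
  - intros; apply Hd.
  - intros z _. apply ex_cont. eexists; apply Hd.
  - rewrite Rmin_left in Hc by lra. rewrite Rmax_right in Hc by lra.
    specialize (Hs c Hc). assert (dw c * (b - a) <= 0).
    { apply Rmult_le_0_r; lra. } lra.
Qed.

Lemma gron (v dv : R -> R) K a b : a <= b -> (forall u, is_derive v u (dv u)) ->
  (forall u, a<=u<=b -> Rabs (dv u) <= K * v u) -> (forall u, 0 <= v u) ->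
  (v a = 0 -> v b = 0) /\ (v b = 0 -> v a = 0).
Proof.
  intros Hab Hd Hb Hp. split; intros H0.
  - pose proof (mono_aux (fun u => v u * exp (- K * u))
      (fun u => dv u * exp (- K * u) + v u * (- K * exp (- K * u))) a b Hab) as M.
    simpl in M. rewrite H0, Rmult_0_l in M.
    assert (v b * exp (- K * b) <= 0).
    { apply M. intros u; apply (dmul v (fun u => exp (- K * u))). apply Hd. apply dexpk.
      intros u Hu. specialize (Hb u Hu). pose proof (exp_pos (-K*u)).
      pose proof (Rle_abs (dv u)).
      replace (dv u * exp (- K * u) + v u * (- K * exp (- K * u))) with ((dv u - K * v u) * exp (-K*u)) by ring.
      apply Rmult_le_0_r; lra. }
    pose proof (exp_pos (-K*b)). pose proof (Hp b).
    destruct (Rle_lt_or_eq_dec 0 (v b) (Hp b)) as [Hl|Hl]; [|lra].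
    pose proof (Rmult_lt_0_compat _ _ Hl H1). lra.
  - pose proof (mono_aux (fun u => - (v u * exp (K * u)))
      (fun u => - (dv u * exp (K * u) + v u * (K * exp (K * u)))) a b Hab) as M.
    simpl in M. rewrite H0, Rmult_0_l in M.
    assert (v a * exp (K * a) <= 0).
    { cut (-0 <= - (v a * exp (K * a))). lra. apply M.
      intros u; apply (is_derive_opp (fun u => v u * exp (K * u))). apply (dmul v (fun u => exp (K * u))). apply Hd. apply dexpk.
      intros u Hu. specialize (Hb u Hu). pose proof (exp_pos (K*u)).
      pose proof (Rle_abs (- dv u)). rewrite Rabs_Ropp in H1.
      replace (- (dv u * exp (K * u) + v u * (K * exp (K * u)))) with ((- dv u - K * v u) * exp (K*u)) by ring.
      apply Rmult_le_0_r; lra. }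
    pose proof (exp_pos (K*a)). pose proof (Hp a).
    destruct (Rle_lt_or_eq_dec 0 (v a) (Hp a)) as [Hl|Hl]; [|lra].
    pose proof (Rmult_lt_0_compat _ _ Hl H1). lra.
Qed.
Lemma mvt (f : R -> R) a b : (forall x, ex_derive f x) ->
  exists c, Rmin a b <= c <= Rmax a b /\ f b - f a = Derive f c * (b - a).
Proof.
  intros H. apply (MVT_gen f a b (Derive f)).
  - intros; now apply Derive_correct.
  - intros; now apply ex_cont.
Qed.

Lemma quad (f : R -> R) s lo hi : (forall x, ex_derive f x) ->
  (forall x, ex_derive (Derive f) x) -> (forall x, continuity_pt (Derive (Derive f)) x) ->
  lo <= s <= hi -> Derive f s = 0 ->
  exists M, forall x, lo <= x <= hi -> Rabs (f x - f s) <= M * (x - s) ^ 2.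
Proof.
  intros H1 H2 H3 Hs Hd.
  destruct (continuity_ab_maj (Derive (Derive f)) lo hi ltac:(lra) (fun c _ => H3 c)) as [Mx [HM HMx]].
  destruct (continuity_ab_min (Derive (Derive f)) lo hi ltac:(lra) (fun c _ => H3 c)) as [mx [Hm Hmx]].
  set (M := Rmax (Rabs (Derive (Derive f) Mx)) (Rabs (Derive (Derive f) mx))).
  assert (HB : forall y, lo <= y <= hi -> Rabs (Derive (Derive f) y) <= M).
  { intros y Hy. specialize (HM y Hy). specialize (Hm y Hy).
    pose proof (Rmax_l (Rabs (Derive (Derive f) Mx)) (Rabs (Derive (Derive f) mx))).
    pose proof (Rmax_r (Rabs (Derive (Derive f) Mx)) (Rabs (Derive (Derive f) mx))).
    fold M in H, H0.
    pose proof (Rle_abs (Derive (Derive f) Mx)). pose proof (Rle_abs (- Derive (Derive f) mx)).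
    rewrite Rabs_Ropp in H5. unfold Rabs at 1; destruct Rcase_abs; lra. }
  exists M. intros x Hx.
  destruct (mvt f s x H1) as [xi [Hxi E1]].
  destruct (mvt (Derive f) s xi H2) as [eta [Heta E2]].
  rewrite Hd in E2.
  assert (Hxi' : Rabs (xi - s) <= Rabs (x - s)).
  { revert Hxi. unfold Rmin, Rmax. destruct Rle_dec; intros;
    unfold Rabs; destruct Rcase_abs; destruct Rcase_abs; lra. }
  assert (Heta' : lo <= eta <= hi).
  { revert Hxi Heta. unfold Rmin, Rmax. destruct Rle_dec; destruct Rle_dec; intros; lra. }
  rewrite E1. replace (Derive f xi) with (Derive (Derive f) eta * (xi - s)) by lra.
  rewrite !Rabs_mult. specialize (HB eta Heta').
  replace ((x - s) ^ 2) with (Rabs (x - s) * Rabs (x - s)).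
  2:{ rewrite <- Rabs_mult. rewrite Rabs_right. ring. apply Rle_ge, Rle_0_sqr. }
  pose proof (Rabs_pos (xi - s)). pose proof (Rabs_pos (x - s)).
  pose proof (Rabs_pos (Derive (Derive f) eta)).
  rewrite Rmult_assoc. apply Rmult_le_compat; try nra.
Qed.
Lemma test (m : R -> R) : smooth m -> (forall x, ex_derive m x) /\ (forall x, ex_derive (Derive m) x) /\ (forall x, ex_derive (Derive (Derive m)) x).
Proof. intros H. split; [|split]; intros x. exact (H 1%nat x). exact (H 2%nat x). exact (H 3%nat x). Qed.
Lemma dconst (s u : R) : is_derive (fun _ : R => s) u 0.
Proof. apply is_derive_Reals, derivable_pt_lim_const. Qed.

Lemma facts m rq thq r th : warping m -> 0 < rq -> is_gamma_q m rq thq r th ->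
  forall u, m rq <= m (r u) /\
    Derive r u * Derive r u <= 2 / m rq * (m (r u) - m rq).
Proof.
  intros [Hs [_ [_ [_ Hm0]]]] Hrq [Hg [E0 [E1 [_ E3]]]] u.
  destruct (test m Hs) as [Hd1 _].
  destruct (conserv m r th Hd1 Hm0 Hg) as [C E].
  specialize (C u 0). specialize (E u 0).
  rewrite ?E0, ?E1, ?E3 in C; rewrite ?E0, ?E1, ?E3 in E.
  set (c := m rq) in *. assert (Hc : 0 < c) by (apply Hm0; lra).
  assert (HM : 0 < m (r u)) by (apply Hm0; apply (Hg u)).
  set (M := m (r u)) in *. set (D := Derive r u) in *. set (T := Derive th u) in *.
  assert (C' : M * M * T = c) by (rewrite C; field; lra).
  assert (E' : D * D + M * M * (T * T) = 1) by (rewrite E; field; lra).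
  assert (HT : T = c / (M * M)) by (rewrite <- C'; field; lra).
  rewrite HT in E'.
  assert (E'' : D * D * (M * M) + c * c = M * M).
  { transitivity ((D*D + M*M*(c/(M*M)*(c/(M*M)))) * (M*M)). field; lra. rewrite E'; ring. }
  assert (HcM : c <= M) by nra.
  split; [exact HcM|].
  apply Rmult_le_reg_r with (M * M * c). apply Rmult_lt_0_compat; nra.
  replace (2 / c * (M - c) * (M * M * c)) with (2 * (M - c) * M * M) by (field; lra).
  replace (D * D * (M * M * c)) with ((M * M - c * c) * c) by (replace (M * M - c * c) with (D * D * (M * M)) by lra; ring).
  assert (0 <= (M - c) * (2 * M * M - (M + c) * c)).
  { apply Rmult_le_pos; nra. }
  nra.
Qed.

Lemma stuck m rq thq r th s t1 : warping m -> 0 < rq -> is_gamma_q m rq thq r th ->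
  m s = m rq -> Derive m s = 0 -> r t1 = s -> forall t, r t = s.
Proof.
  intros Hw Hrq Hgq Hms Hds Ht1.
  pose proof (facts m rq thq r th Hw Hrq Hgq) as F.
  pose proof Hw as [Hs [_ [_ [_ Hm0]]]].
  destruct (test m Hs) as [Hd1 [Hd2 Hd3]].
  pose proof Hgq as [Hg _].
  assert (Hrd : forall u, is_derive r u (Derive r u)).
  { intros u; apply Derive_correct, (Hg u). }
  assert (Hc : 0 < m rq) by (apply Hm0; lra).
  assert (G : forall a b, a <= t1 <= b -> r a = s /\ r b = s).
  { intros a b Hab.
    destruct (continuity_ab_min r a b ltac:(lra) (fun c _ => ex_cont r c (ex_intro _ _ (Hrd c)))) as [mn [Hmn Hmnab]].
    destruct (continuity_ab_maj r a b ltac:(lra) (fun c _ => ex_cont r c (ex_intro _ _ (Hrd c)))) as [mx [Hmx Hmxab]].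
    destruct (quad m s (r mn) (r mx) Hd1 Hd2 (fun x => ex_cont _ x (Hd3 x))) as [Mq HMq].
    { rewrite <- Ht1. split; [apply Hmn|apply Hmx]; lra. }
    { exact Hds. }
    set (K := 1 + Rabs (2 / m rq * Mq)).
    set (v := fun u => (r u - s) * (r u - s)).
    set (dv := fun u => 2 * (r u - s) * Derive r u).
    assert (Hv : forall u, is_derive v u (dv u)).
    { intros u. unfold v, dv.
      replace (2 * (r u - s) * Derive r u) with (Derive r u * (r u - s) + (r u - s) * Derive r u) by ring.
      apply (dmul (fun u => r u - s) (fun u => r u - s));
      (replace (Derive r u) with (Derive r u - 0) by ring;
       apply (is_derive_minus r (fun _ => s)); [apply Hrd | apply dconst]). }
    assert (Hb : forall u, a <= u <= b -> Rabs (dv u) <= K * v u).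
    { intros u Hu. unfold dv, v, K.
      destruct (F u) as [F1 F2].
      assert (Hx : r mn <= r u <= r mx) by (split; [apply Hmn|apply Hmx]; lra).
      specialize (HMq (r u) Hx). rewrite Hms in HMq.
      assert (F3 : Derive r u * Derive r u <= Rabs (2 / m rq * Mq) * ((r u - s) * (r u - s))).
      { assert (0 <= 2 / m rq) by (apply Rlt_le, Rdiv_lt_0_compat; lra).
        pose proof (Rle_abs (m (r u) - m rq)).
        pose proof (Rle_abs (2 / m rq * Mq)).
        assert (2 / m rq * (m (r u) - m rq) <= 2 / m rq * (Mq * (r u - s) ^ 2)).
        { apply Rmult_le_compat_l; lra. }
        assert (0 <= (r u - s) * (r u - s)) by apply Rle_0_sqr.
        replace ((r u - s) ^ 2) with ((r u - s) * (r u - s)) in H2 by ring.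
        assert (2 / m rq * Mq * ((r u - s) * (r u - s)) <= Rabs (2 / m rq * Mq) * ((r u - s) * (r u - s))).
        { apply Rmult_le_compat_r; lra. }
        rewrite Rmult_assoc in H4. lra. }
      set (A := r u - s) in *. set (B := Derive r u) in *.
      rewrite Rabs_mult, Rabs_mult, (Rabs_right 2) by lra.
      assert (Rabs A * Rabs A = A * A) by (rewrite <- Rabs_mult; apply Rabs_right; nra).
      assert (Rabs B * Rabs B = B * B) by (rewrite <- Rabs_mult; apply Rabs_right; nra).
      pose proof (Rabs_pos A). pose proof (Rabs_pos B).
      assert (0 <= (Rabs A - Rabs B) * (Rabs A - Rabs B)) by apply Rle_0_sqr.
      pose proof (Rabs_pos (2 / m rq * Mq)).
      assert (0 <= A * A) by apply Rle_0_sqr.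
      nra. }
    assert (Hp : forall u, 0 <= v u) by (intros; unfold v; apply Rle_0_sqr).
    assert (Hv1 : v t1 = 0) by (unfold v; rewrite Ht1; ring).
    destruct (gron v dv K a t1 ltac:(lra) Hv (fun u Hu => Hb u ltac:(lra)) Hp) as [_ Ga].
    destruct (gron v dv K t1 b ltac:(lra) Hv (fun u Hu => Hb u ltac:(lra)) Hp) as [Gb _].
    specialize (Ga Hv1). specialize (Gb Hv1). unfold v in Ga, Gb.
    split; nra. }
  intros t. destruct (Rle_dec t1 t).
  - apply (G t1 t). lra.
  - apply (G t t1). lra.
Qed.

Theorem lemma3p2 (m : R -> R) (rq thq : R) (r th : R -> R) :
  warping m -> 0 < rq ->
  is_gamma_q m rq thq r th ->
  escaping r ->
  (forall s : R, rq < s -> m rq < m s) /\ 0 < Derive m rq.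
Proof.
  intros Hw Hrq Hgq Hesc.
  pose proof (facts m rq thq r th Hw Hrq Hgq) as F.
  pose proof Hw as [Hs [_ [_ [_ Hm0]]]].
  destruct (test m Hs) as [Hd1 [Hd2 Hd3]].
  pose proof Hgq as [Hg [E0 _]].
  assert (Hrc : continuity r).
  { intros u. apply ex_cont. apply (Hg u). }
  assert (Hreach : forall x, rq <= x -> exists t1, r t1 = x).
  { intros x Hx. destruct (Hesc x) as [t [Ht Hxt]].
    destruct (IVT_gen r 0 t x Hrc) as [t1 [_ Ht1]].
    { rewrite E0. unfold Rmin, Rmax. destruct Rle_dec; lra. }
    now exists t1. }
  assert (Hge : forall x, rq <= x -> m rq <= m x).
  { intros x Hx. destruct (Hreach x Hx) as [t1 Ht1]. rewrite <- Ht1. apply F. }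
  assert (P1 : forall s, rq < s -> m rq < m s).
  { intros s Hs'. destruct (Rlt_le_dec (m rq) (m s)) as [H|H]; [exact H|exfalso].
    assert (Hms : m s = m rq) by (pose proof (Hge s ltac:(lra)); lra).
    assert (Hds : Derive m s = 0).
    { rewrite <- (Derive_Reals m s (ex_derive_Reals_0 m s (Hd1 s))).
      apply (deriv_minimum m rq (s + 1) s); try lra.
      intros x Hx1 Hx2. rewrite Hms. apply Hge. lra. }
    destruct (Hreach s ltac:(lra)) as [t1 Ht1].
    pose proof (stuck m rq thq r th s t1 Hw Hrq Hgq Hms Hds Ht1 0). lra. }
  split; [exact P1|].
  destruct (Rtotal_order 0 (Derive m rq)) as [H|[H|H]]; [exact H| |]; exfalso.
  - pose proof (stuck m rq thq r th rq 0 Hw Hrq Hgq eq_refl (eq_sym H) E0) as St.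
    destruct (Hesc rq) as [t [_ Ht]]. rewrite St in Ht. lra.
  - pose proof (proj1 (is_derive_Reals m rq _) (Derive_correct m rq (Hd1 rq))) as L.
    destruct (L (- Derive m rq) ltac:(lra)) as [delta Hdel].
    pose proof (cond_pos delta) as Hdp.
    specialize (Hdel (delta / 2) ltac:(lra) ltac:(rewrite Rabs_right; lra)).
    pose proof (P1 (rq + delta / 2) ltac:(lra)) as Hinc.
    assert (0 < (m (rq + delta / 2) - m rq) / (delta / 2)).
    { apply Rdiv_lt_0_compat; lra. }
    rewrite Rabs_right in Hdel by lra. lra.
Qed.
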